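(* Let $C$ be the middle-thirds Cantor set. For every $K<\infty$ and $n\in\mathbb{N}$ let \[ S_n^{(K)}:=\{p/q\in C:\ \gcd(p,q)=1,\ 3^{n-1}\le q<3^n,\ P(p/q)\le K\log q\}. \] Then for every $\varepsilon_1>0$ we have $\#(S_n^{(K)})=O\big(2^{n(1+\varepsilon_1)}\big)$ as $n\to\infty$.
   Context: $C=\{x\in[0,1]: x=\sum_{i\ge1}a_i3^{-i}\text{ with all }a_i\in\{0,2\}\}$. For a rational number $p/q$, its period $P(p/q)$ is the (minimal) period of the eventually periodic part of its ternary expansion. $\log$ is the natural logarithm; $p\in\mathbb{Z}$, $q\in\mathbb{N}$. *)

(* Defs.v *)
From Stdlib Require Import Reals Lra Lia ZArith Arith List.
Open Scope R_scope.

Definition in_cantor (x : R) : Prop :=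
  exists a : nat -> nat,
    (forall i, a i = 0%nat \/ a i = 2%nat) /\
    infinite_sum (fun i => INR (a (S i)) / 3 ^ (S i)) x.

(* i-th ternary digit (i >= 1) of p/q : floor(3^i p / q) mod 3. *)
Definition tdigit (p : Z) (q : nat) (i : nat) : Z :=
  Z.modulo (Z.div (p * 3 ^ Z.of_nat i) (Z.of_nat q)) 3.

Definition is_eperiod (p : Z) (q : nat) (T : nat) : Prop :=
  (1 <= T)%nat /\
  exists N : nat, forall i : nat, (1 <= i)%nat -> (N <= i)%nat ->
    tdigit p q (i + T) = tdigit p q i.

Definition is_period (p : Z) (q : nat) (T : nat) : Prop :=
  is_eperiod p q T /\ forall T', is_eperiod p q T' -> (T <= T')%nat.

Definition in_S (K : R) (n : nat) (pq : Z * nat) : Prop :=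
  let (p, q) := pq in
  in_cantor (IZR p / INR q) /\
  Z.gcd p (Z.of_nat q) = 1%Z /\
  (3 ^ (n - 1) <= q < 3 ^ n)%nat /\
  exists T : nat, is_period p q T /\ INR T <= K * ln (INR q).

(* Main.v *)
Require Import Defs.
From Stdlib Require Import Reals ZArith Arith List.
From Stdlib Require Import Lra Lia Classical.
Open Scope R_scope.
Open Scope nat_scope.

Lemma pigeon {A B : Type} (R : A -> B -> Prop) (l : list A) :
  NoDup l -> forall Y : list B,
  (forall x, In x l -> exists y, In y Y /\ R x y) ->
  (forall x x' y, In x l -> In x' l -> R x y -> R x' y -> x = x') ->
  length l <= length Y.
Proof.
  induction 1 as [|x l Hx Hnd IH]; intros Y Hex Hinj; simpl; [lia|].
  destruct (Hex x (or_introl eq_refl)) as [y [Hy Rxy]].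
  destruct (in_split _ _ Hy) as [Y1 [Y2 ->]].
  assert (length l <= length (Y1 ++ Y2)).
  { apply IH.
    - intros x' Hx'. destruct (Hex x' (or_intror Hx')) as [y' [Hy' R']].
      apply in_app_iff in Hy'. destruct Hy' as [H|[H|H]].
      + exists y'; split; auto; apply in_app_iff; auto.
      + subst y'. exfalso. assert (x' = x) by (apply (Hinj x' x y); simpl; auto). subst; auto.
      + exists y'; split; auto; apply in_app_iff; auto.
    - intros; apply (Hinj x0 x' y0); simpl; auto. }
  rewrite length_app in *. simpl. lia.
Qed.

Definition divs (M : nat) : list nat :=
  filter (fun e => Nat.eqb (M mod e) 0) (seq 1 M).
Definition dv (M : nat) : nat := length (divs M).

Lemma divs_NoDup M : NoDup (divs M).
Proof. apply NoDup_filter, seq_NoDup. Qed.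

Lemma in_divs M e : 1 <= M -> (In e (divs M) <-> Nat.divide e M /\ 1 <= e).
Proof.
  intros HM. unfold divs. rewrite filter_In, in_seq, Nat.eqb_eq. split.
  - intros [H1 H2]. split; [|lia]. apply Nat.Private_NLcmProp.mod_divide; [lia|auto].
  - intros [H1 H2]. assert (e <= M) by (apply Nat.divide_pos_le; [lia|auto]).
    split; [lia|]. apply Nat.Private_NLcmProp.mod_divide; [lia|auto].
Qed.

Lemma dv_mul x y : 1 <= x -> 1 <= y -> dv (x * y) <= dv x * dv y.
Proof.
  intros Hx Hy. unfold dv. rewrite <- length_prod.
  apply (pigeon (fun e (pr : nat * nat) => e = fst pr * snd pr)).
  - apply divs_NoDup.
  - intros e He. apply in_divs in He; [|nia]. destruct He as [He He1].
    set (g := Nat.gcd e x).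
    assert (Hg0 : g <> 0) by (unfold g; intro H; apply Nat.gcd_eq_0 in H; lia).
    assert (Hge : Nat.divide g e) by apply Nat.gcd_divide_l.
    assert (Hgx : Nat.divide g x) by apply Nat.gcd_divide_r.
    destruct Hge as [e2 He2]. destruct Hgx as [x2 Hx2].
    exists (g, e2). split.
    + apply in_prod_iff. split.
      * apply in_divs; auto. split; [exists x2; auto|lia].
      * apply in_divs; auto. split; [|nia].
        assert (Hc : Nat.gcd e2 x2 = 1).
        { pose proof (Nat.gcd_div_gcd e x g Hg0 eq_refl) as H.
          rewrite He2, Hx2, !Nat.div_mul in H; auto. }
        apply (Nat.gauss _ x2); auto.
        destruct He as [k Hk]. exists k.
        apply (Nat.mul_cancel_l _ _ g); auto.
        rewrite He2, Hx2 in Hk. nia.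
    + simpl. lia.
  - intros e e' [a b] _ _; simpl; intros; subst; auto.
Qed.

Definition nprime (p : nat) : Prop :=
  2 <= p /\ forall d, Nat.divide d p -> d = 1 \/ d = p.

Lemma prime_pow_div p a e : nprime p -> Nat.divide e (p ^ a) ->
  exists i, i <= a /\ e = p ^ i.
Proof.
  intros [Hp2 Hp]. revert e. induction a; intros e He.
  - exists 0. simpl in *. split; [lia|]. apply Nat.divide_1_r; auto.
  - destruct (classic (Nat.divide p e)) as [[e' ->]|Hn].
    + simpl in He. rewrite (Nat.mul_comm e' p) in He.
      apply Nat.mul_divide_cancel_l in He; [|lia].
      destruct (IHa e' He) as [i [Hi ->]]. exists (S i). split; [lia|]. simpl; lia.
    + assert (Hc : Nat.gcd e p = 1).
      { destruct (Hp (Nat.gcd e p) (Nat.gcd_divide_r _ _)) as [H|H]; auto.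
        exfalso; apply Hn. rewrite <- H. apply Nat.gcd_divide_l. }
      simpl in He. apply Nat.gauss in He; auto.
      destruct (IHa e He) as [i [Hi ->]]. exists i; split; [lia|auto].
Qed.

Lemma dv_ppow p a : nprime p -> dv (p ^ a) <= S a.
Proof.
  intros Hp. unfold dv. rewrite <- (length_seq (S a) 0).
  assert (Hpa : 1 <= p ^ a) by (apply Nat.pow_lower_bound; destruct Hp; lia).
  apply (pigeon (fun e i => e = p ^ i)).
  - apply divs_NoDup.
  - intros e He. apply in_divs in He; auto. destruct He as [He _].
    destruct (prime_pow_div p a e Hp He) as [i [Hi ->]].
    exists i. split; auto. apply in_seq. lia.
  - intros; subst; auto.
Qed.

Lemma exists_prime_div M : 2 <= M -> exists p, nprime p /\ Nat.divide p M.
Proof.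
  induction M as [M IH] using (well_founded_induction lt_wf). intros HM.
  destruct (classic (nprime M)) as [H|H].
  - exists M; split; auto. apply Nat.divide_refl.
  - assert (exists d, Nat.divide d M /\ d <> 1 /\ d <> M) as [d [Hd [Hd1 HdM]]].
    { apply NNPP; intro Hc. apply H. split; auto. intros d Hd.
      destruct (classic (d = 1)); auto. destruct (classic (d = M)); auto.
      exfalso; apply Hc; eauto. }
    assert (d <= M) by (apply Nat.divide_pos_le; [lia|auto]).
    assert (d <> 0) by (intro; subst; destruct Hd; lia).
    destruct (IH d) as [p [Hp Hpd]]; try lia.
    exists p; split; auto. eapply Nat.divide_trans; eauto.
Qed.

Lemma factor_out p M : nprime p -> 1 <= M ->
  exists a m, M = p ^ a * m /\ ~ Nat.divide p m /\ 1 <= m.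
Proof.
  intros Hp. induction M as [M IH] using (well_founded_induction lt_wf). intros HM.
  destruct (classic (Nat.divide p M)) as [[m ->]|Hn].
  - destruct Hp as [Hp2 _].
    destruct (IH m) as [a [m' [E [H1 H2]]]]; try nia.
    exists (S a), m'. split; auto. simpl. rewrite E. lia.
  - exists 0, M. simpl. repeat split; auto; lia.
Qed.

Lemma succ_le_pow2 a : S a <= 2 ^ a.
Proof. induction a; simpl; [lia|]. pose proof (Nat.pow_lower_bound 2 a). lia. Qed.

Lemma small_bound j a : 1 <= j -> (S a) ^ j <= j ^ j * 2 ^ a.
Proof.
  intros Hj. set (b := a / j).
  assert (Ha : a < j * (b + 1)).
  { unfold b. pose proof (Nat.div_mod a j ltac:(lia)). pose proof (Nat.mod_upper_bound a j ltac:(lia)). lia. }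
  assert (H1 : S a <= j * 2 ^ b).
  { pose proof (succ_le_pow2 b). nia. }
  assert (H2 : b * j <= a) by (unfold b; rewrite Nat.mul_comm; apply Nat.Div0.mul_div_le).
  eapply Nat.le_trans. apply Nat.pow_le_mono_l; eauto.
  rewrite Nat.pow_mul_l. apply Nat.mul_le_mono_l.
  rewrite <- Nat.pow_mul_r. apply Nat.pow_le_mono_r; lia.
Qed.

Lemma claim_base j : forall M, 1 <= M ->
  (forall p, nprime p -> Nat.divide p M -> 2 ^ j <= p) -> dv M ^ j <= M.
Proof.
  intro M. induction M as [M IH] using (well_founded_induction lt_wf). intros HM Hf.
  destruct (Nat.eq_dec M 1) as [->|HM1].
  - unfold dv, divs. simpl. rewrite Nat.pow_1_l. lia.
  - destruct (exists_prime_div M) as [p [Hp Hpd]]; [lia|].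
    destruct (factor_out p M Hp HM) as [a [m [E [Hn Hm]]]].
    assert (Hpa : 1 <= p ^ a) by (apply Nat.pow_lower_bound; destruct Hp; lia).
    assert (a <> 0) by (intro; subst a; rewrite Nat.pow_0_r, Nat.mul_1_l in E; subst m; auto).
    assert (Hlt : m < M).
    { rewrite E. destruct Hp as [Hp2 _]. assert (p <= p ^ a).
      { destruct a; [lia|]. simpl. pose proof (Nat.pow_lower_bound p a). nia. } nia. }
    assert (IHm : dv m ^ j <= m).
    { apply IH; auto. intros p' Hp' Hd. apply Hf; auto.
      rewrite E. apply Nat.divide_mul_r; auto. }
    assert (Hd : dv M <= S a * dv m).
    { rewrite E. eapply Nat.le_trans. apply dv_mul; auto.
      apply Nat.mul_le_mono_r. apply dv_ppow; auto. }
    assert (Hp2j : 2 ^ j <= p) by auto.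
    assert (Ha : S a ^ j <= p ^ a).
    { eapply Nat.le_trans. apply Nat.pow_le_mono_l, succ_le_pow2.
      rewrite <- Nat.pow_mul_r, Nat.mul_comm, Nat.pow_mul_r.
      apply Nat.pow_le_mono_l; auto. }
    eapply Nat.le_trans. apply Nat.pow_le_mono_l, Hd.
    rewrite Nat.pow_mul_l, E. apply Nat.mul_le_mono; auto.
Qed.

Lemma claim_step j : 1 <= j -> forall k M, 1 <= M ->
  (forall p, nprime p -> Nat.divide p M -> p < k \/ 2 ^ j <= p) ->
  dv M ^ j <= (j ^ j) ^ k * M.
Proof.
  intros Hj k. induction k; intros M HM Hf.
  - simpl. rewrite Nat.add_0_r. apply claim_base; auto.
    intros p Hp Hd. destruct (Hf p Hp Hd); auto; lia.
  - assert (Hc1 : 1 <= j ^ j) by (apply Nat.pow_lower_bound; lia).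
    destruct (classic (nprime k /\ k < 2 ^ j /\ Nat.divide k M)) as [[Hk [Hkj HkM]]|Hno].
    + destruct (factor_out k M Hk HM) as [a [m [E [Hn Hm]]]].
      assert (IHm : dv m ^ j <= (j ^ j) ^ k * m).
      { apply IHk; auto. intros p' Hp' Hd.
        assert (p' <> k) by (intro; subst; auto).
        destruct (Hf p' Hp'); [rewrite E; apply Nat.divide_mul_r; auto| |]; lia. }
      assert (Hpa : 1 <= k ^ a) by (apply Nat.pow_lower_bound; destruct Hk; lia).
      assert (Hd : dv M <= S a * dv m).
      { rewrite E. eapply Nat.le_trans. apply dv_mul; auto.
        apply Nat.mul_le_mono_r. apply dv_ppow; auto. }
      assert (Ha : S a ^ j <= j ^ j * k ^ a).
      { eapply Nat.le_trans. apply small_bound; auto.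
        apply Nat.mul_le_mono_l, Nat.pow_le_mono_l. destruct Hk; lia. }
      eapply Nat.le_trans. apply Nat.pow_le_mono_l, Hd.
      rewrite Nat.pow_mul_l, E. simpl (_ ^ S k).
      replace (j ^ j * (j ^ j) ^ k * (k ^ a * m)) with ((j ^ j * k ^ a) * ((j ^ j) ^ k * m)) by ring.
      apply Nat.mul_le_mono; auto.
    + eapply Nat.le_trans. apply IHk; auto.
      * intros p Hp Hd. destruct (Hf p Hp Hd) as [H|H]; auto.
        destruct (Nat.eq_dec p k) as [->|]; [|lia].
        destruct (le_lt_dec (2 ^ j) k); auto. exfalso; apply Hno; auto.
      * simpl. apply Nat.mul_le_mono_r.
        assert (1 <= (j ^ j) ^ k) by (apply Nat.pow_lower_bound; lia). nia.
Qed.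

Lemma divisor_bound j : 1 <= j -> exists C, 1 <= C /\ forall M, 1 <= M -> dv M ^ j <= C * M.
Proof.
  intros Hj. exists ((j ^ j) ^ (2 ^ j)). split.
  - apply Nat.pow_lower_bound. pose proof (Nat.pow_lower_bound j j). lia.
  - intros M HM. apply claim_step; auto. intros p _ _. lia.
Qed.

Lemma nprime3 : nprime 3.
Proof.
  split; [lia|]. intros d Hd. assert (d <= 3) by (apply Nat.divide_pos_le; [lia|auto]).
  destruct d as [|[|[|[|d]]]]; try lia.
  - destruct Hd as [k Hk]; lia.
  - destruct Hd as [k Hk]; lia.
Qed.

Lemma reduce3 q M X n : 1 <= q -> q < 3 ^ n -> Nat.divide q (3 ^ M * X) ->
  Nat.divide q (3 ^ n * X).
Proof.
  intros Hq Hqn Hd.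
  assert (H1 : Nat.divide q (Nat.gcd (3 ^ M * X) (q * X))).
  { apply Nat.gcd_greatest; auto. apply Nat.divide_factor_l. }
  rewrite Nat.gcd_mul_mono_r in H1.
  destruct (prime_pow_div 3 M (Nat.gcd (3 ^ M) q) nprime3 (Nat.gcd_divide_l _ _)) as [i [_ Hi]].
  rewrite Hi in H1.
  assert (3 ^ i <= q).
  { rewrite <- Hi. apply Nat.divide_pos_le; [lia|apply Nat.gcd_divide_r]. }
  assert (i <= n).
  { destruct (le_lt_dec i n); auto. assert (3 ^ n < 3 ^ i) by (apply Nat.pow_lt_mono_r; lia). lia. }
  eapply Nat.divide_trans; [apply H1|]. apply Nat.mul_divide_mono_r.
  exists (3 ^ (n - i)). rewrite <- Nat.pow_add_r. f_equal. lia.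
Qed.

Fixpoint all02 (n : nat) : list (list nat) :=
  match n with
  | 0 => nil :: nil
  | S n => map (cons 0) (all02 n) ++ map (cons 2) (all02 n)
  end.

Lemma all02_length n : length (all02 n) = 2 ^ n.
Proof. induction n; simpl; auto. rewrite length_app, !length_map, IHn. lia. Qed.

Lemma all02_in n l : length l = n -> (forall x, In x l -> x = 0 \/ x = 2) -> In l (all02 n).
Proof.
  revert l; induction n; intros l Hl Hx.
  - destruct l; simpl in *; auto; lia.
  - destruct l as [|x l]; simpl in Hl; [lia|]. simpl. apply in_app_iff.
    assert (In l (all02 n)) by (apply IHn; [lia|intros; apply Hx; simpl; auto]).
    destruct (Hx x (or_introl eq_refl)) as [->| ->]; [left|right]; apply in_map; auto.
Qed.

Open Scope R_scope.

Lemma INR02 (a : nat -> nat) i : (a i = 0 \/ a i = 2)%nat -> 0 <= INR (a i) <= 2.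
Proof. intros [-> | ->]; simpl; lra. Qed.

Lemma tail_sum (a a' : nat -> nat) n :
  (forall i, a i = 0 \/ a i = 2)%nat -> (forall i, a' i = 0 \/ a' i = 2)%nat ->
  (forall i, (1 <= i <= n)%nat -> a i = a' i) ->
  forall N, sum_f_R0 (fun i => Rabs (INR (a (S i)) / 3 ^ (S i) - INR (a' (S i)) / 3 ^ (S i))) N
    <= / 3 ^ n - / 3 ^ (Nat.max n (S N)).
Proof.
  intros Ha Ha' Heq.
  assert (Hg : forall i, Rabs (INR (a (S i)) / 3 ^ (S i) - INR (a' (S i)) / 3 ^ (S i)) <= 2 / 3 ^ (S i)).
  { intro i. pose proof (INR02 a (S i) (Ha _)). pose proof (INR02 a' (S i) (Ha' _)).
    assert (0 < 3 ^ S i) by (apply pow_lt; lra).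
    unfold Rdiv. apply Rabs_le. split.
    - assert (INR (a (S i)) * / 3 ^ S i >= 0) by (apply Rle_ge, Rmult_le_pos; auto; [lra|left; apply Rinv_0_lt_compat; auto]).
      assert (INR (a' (S i)) * / 3 ^ S i <= 2 * / 3 ^ S i) by (apply Rmult_le_compat_r; [left; apply Rinv_0_lt_compat|]; lra).
      lra.
    - assert (INR (a' (S i)) * / 3 ^ S i >= 0) by (apply Rle_ge, Rmult_le_pos; auto; [lra|left; apply Rinv_0_lt_compat; auto]).
      assert (INR (a (S i)) * / 3 ^ S i <= 2 * / 3 ^ S i) by (apply Rmult_le_compat_r; [left; apply Rinv_0_lt_compat|]; lra).
      lra. }
  assert (Hz : forall i, (S i <= n)%nat -> Rabs (INR (a (S i)) / 3 ^ (S i) - INR (a' (S i)) / 3 ^ (S i)) = 0).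
  { intros i Hi. rewrite Heq by lia. rewrite Rminus_diag, Rabs_R0. auto. }
  induction N.
  - simpl sum_f_R0. destruct n.
    + simpl Nat.max. pose proof (Hg 0%nat). simpl in *. lra.
    + rewrite Hz by lia. rewrite Nat.max_l by lia. lra.
  - rewrite tech5. destruct (le_lt_dec (S (S N)) n).
    + rewrite Hz by lia. assert (E1 : Nat.max n (S (S N)) = n) by lia.
      assert (E2 : Nat.max n (S N) = n) by lia. rewrite E1. rewrite E2 in IHN. lra.
    + assert (E1 : Nat.max n (S (S N)) = S (S N)) by lia.
      assert (E2 : Nat.max n (S N) = S N) by lia. rewrite E1. rewrite E2 in IHN.
      pose proof (Hg (S N)).
      replace (3 ^ S (S N)) with (3 * 3 ^ S N) in * by (simpl; ring).
      assert (0 < 3 ^ S N) by (apply pow_lt; lra).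
      unfold Rdiv in *. rewrite Rinv_mult in *. lra.
Qed.

Lemma cantor_close (a a' : nat -> nat) x x' n :
  (forall i, a i = 0 \/ a i = 2)%nat -> (forall i, a' i = 0 \/ a' i = 2)%nat ->
  (forall i, (1 <= i <= n)%nat -> a i = a' i) ->
  infinite_sum (fun i => INR (a (S i)) / 3 ^ (S i)) x ->
  infinite_sum (fun i => INR (a' (S i)) / 3 ^ (S i)) x' ->
  Rabs (x - x') <= / 3 ^ n.
Proof.
  intros Ha Ha' Heq Hx Hx'.
  apply Rnot_lt_le. intro Hlt.
  set (e := (Rabs (x - x') - / 3 ^ n) / 3).
  assert (He : e > 0) by (unfold e; lra).
  destruct (Hx e He) as [N1 H1]. destruct (Hx' e He) as [N2 H2].
  set (N := Nat.max N1 N2).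
  specialize (H1 N ltac:(lia)). specialize (H2 N ltac:(lia)). unfold R_dist in *.
  pose proof (tail_sum a a' n Ha Ha' Heq N) as T.
  pose proof (sum_f_R0_triangle (fun i => INR (a (S i)) / 3 ^ S i - INR (a' (S i)) / 3 ^ S i) N) as Tr.
  rewrite minus_sum in Tr.
  assert (0 < / 3 ^ Nat.max n (S N)) by (apply Rinv_0_lt_compat, pow_lt; lra).
  assert (Rabs (x - x') <= Rabs (sum_f_R0 (fun i => INR (a (S i)) / 3 ^ S i) N - x)
     + Rabs (sum_f_R0 (fun i => INR (a' (S i)) / 3 ^ S i) N - x')
     + Rabs (sum_f_R0 (fun i => INR (a (S i)) / 3 ^ S i) N - sum_f_R0 (fun i => INR (a' (S i)) / 3 ^ S i) N)).
  { set (s := sum_f_R0 (fun i => INR (a (S i)) / 3 ^ S i) N) in *.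
    set (s' := sum_f_R0 (fun i => INR (a' (S i)) / 3 ^ S i) N) in *.
    replace (x - x') with (-(s - x) + (s' - x') + (s - s')) by ring.
    eapply Rle_trans; [apply Rabs_triang|]. apply Rplus_le_compat_r.
    eapply Rle_trans; [apply Rabs_triang|]. rewrite Rabs_Ropp. lra. }
  unfold e in *. lra.
Qed.
Open Scope Z_scope.

Definition rr (p : Z) (q : nat) (i : nat) : Z := (p * 3 ^ Z.of_nat i) mod Z.of_nat q.

Lemma rr_step p q i : (1 <= q)%nat ->
  rr p q (S i) = 3 * rr p q i - Z.of_nat q * tdigit p q (S i) /\
  0 <= rr p q i < Z.of_nat q.
Proof.
  intros Hq. unfold rr, tdigit. set (Q := Z.of_nat q). assert (HQ : 0 < Q) by (unfold Q; lia).
  set (X := p * 3 ^ Z.of_nat i).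
  assert (E : p * 3 ^ Z.of_nat (S i) = Q * (3 * (X / Q)) + 3 * (X mod Q)).
  { rewrite Nat2Z.inj_succ, Z.pow_succ_r by lia. pose proof (Z.div_mod X Q ltac:(lia)). unfold X in *. nia. }
  pose proof (Z.mod_pos_bound X Q HQ) as Hr.
  rewrite E. split; [|lia].
  assert (Hc : 0 <= 3 * (X mod Q) / Q < 3).
  { split. apply Z.div_pos; lia. apply Z.div_lt_upper_bound; lia. }
  assert (D1 : (3*(X/Q)*Q + 3*(X mod Q)) / Q = 3*(X/Q) + 3*(X mod Q)/Q) by (apply Z.div_add_l; lia).
  assert (M1 : (3*(X/Q)*Q + 3*(X mod Q)) mod Q = (3*(X mod Q)) mod Q) by (rewrite Z.add_comm; apply Z.mod_add; lia).
  assert (M2 : (3*(X/Q) + 3*(X mod Q)/Q) mod 3 = 3*(X mod Q)/Q).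
  { rewrite Z.add_comm, (Z.mul_comm 3 (X/Q)), Z.mod_add by lia. apply Z.mod_small; lia. }
  rewrite (Z.mul_comm Q), D1, M1, M2, (Z.mod_eq (3 * (X mod Q)) Q) by lia. ring.
Qed.

Lemma period_div p q T : (1 <= q)%nat -> Z.gcd p (Z.of_nat q) = 1 -> is_eperiod p q T ->
  exists M, Nat.divide q (3 ^ M * (3 ^ T - 1)).
Proof.
  intros Hq Hg [HT [N HN]].
  set (Q := Z.of_nat q). assert (HQ : 0 < Q) by (unfold Q; lia).
  set (M0 := Nat.max N 1).
  set (u := fun k => rr p q (M0 + k + T) - rr p q (M0 + k)).
  assert (Hu : forall k, u (S k) = 3 * u k).
  { intro k. unfold u.
    replace (M0 + S k + T)%nat with (S (M0 + k + T)) by lia.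
    replace (M0 + S k)%nat with (S (M0 + k)) by lia.
    destruct (rr_step p q (M0 + k + T) Hq) as [E1 _].
    destruct (rr_step p q (M0 + k) Hq) as [E2 _].
    rewrite E1, E2. replace (S (M0 + k + T)) with (S (M0 + k) + T)%nat by lia.
    rewrite (HN (S (M0 + k))) by lia. ring. }
  assert (Hb : forall k, Z.abs (u k) < Q).
  { intro k. unfold u. destruct (rr_step p q (M0 + k + T) Hq) as [_ B1].
    destruct (rr_step p q (M0 + k) Hq) as [_ B2]. fold Q in B1, B2. lia. }
  assert (Hk : forall k, u k = 3 ^ Z.of_nat k * u 0%nat).
  { induction k. change (Z.of_nat 0) with 0; rewrite Z.pow_0_r; ring. rewrite Hu, IHk, Nat2Z.inj_succ, Z.pow_succ_r by lia. ring. }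
  assert (Hu0 : u 0%nat = 0).
  { destruct (Z.eq_dec (u 0%nat) 0) as [|Hne]; auto. exfalso.
    pose proof (Hb q) as B. rewrite Hk in B.
    assert (Hpow : Q < 3 ^ Z.of_nat q).
    { unfold Q. clear. induction q. simpl; lia. rewrite Nat2Z.inj_succ, Z.pow_succ_r by lia. lia. }
    rewrite Z.abs_mul, Z.abs_eq in B by (apply Z.pow_nonneg; lia). nia. }
  unfold u in Hu0. rewrite !Nat.add_0_r in Hu0. unfold rr in Hu0. fold Q in Hu0.
  set (A := p * 3 ^ Z.of_nat (M0 + T)) in *. set (B := p * 3 ^ Z.of_nat M0) in *.
  assert (HD : (Q | A - B)).
  { exists (A / Q - B / Q). pose proof (Z.div_mod A Q ltac:(lia)). pose proof (Z.div_mod B Q ltac:(lia)). lia. }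
  assert (HAB : A - B = p * (3 ^ Z.of_nat M0 * (3 ^ Z.of_nat T - 1))).
  { unfold A, B. rewrite Nat2Z.inj_add, Z.pow_add_r by lia. ring. }
  rewrite HAB in HD. apply Z.gauss in HD; [|rewrite Z.gcd_comm; auto].
  exists M0.
  assert (H3T : (1 <= 3 ^ T)%nat) by (apply Nat.pow_lower_bound; lia).
  assert (HV : Z.of_nat (3 ^ M0 * (3 ^ T - 1)) = 3 ^ Z.of_nat M0 * (3 ^ Z.of_nat T - 1)).
  { rewrite Nat2Z.inj_mul, Nat2Z.inj_sub, !Nat2Z.inj_pow by auto. reflexivity. }
  rewrite <- HV in HD. destruct HD as [k Hkk]. fold Q in Hkk.
  assert (0 <= k) by nia.
  exists (Z.to_nat k). apply Nat2Z.inj. rewrite HV, Nat2Z.inj_mul, Z2Nat.id by auto. rewrite <- HV. lia.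
Qed.
Open Scope R_scope.

Lemma map_eq_in {A B} (f g : A -> B) s : map f s = map g s -> forall x, In x s -> f x = g x.
Proof.
  induction s; simpl; intros H x Hx; [contradiction|]. injection H; intros.
  destruct Hx; subst; auto.
Qed.

Lemma flat_len {A B} (f : A -> list B) s (Bd : R) :
  (forall x, In x s -> INR (length (f x)) <= Bd) ->
  INR (length (flat_map f s)) <= INR (length s) * Bd.
Proof.
  induction s; intros H; [simpl; lra|]. cbn [flat_map length].
  rewrite length_app, plus_INR; try rewrite S_INR.
  pose proof (H a (or_introl eq_refl)). pose proof (IHs (fun x Hx => H x (or_intror Hx))). lra.
Qed.

Lemma up_nat r : r <= INR (Z.to_nat (up r)).
Proof.
  destruct (archimed r) as [H1 H2].
  destruct (Z_le_gt_dec 0 (up r)).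
  - rewrite INR_IZR_INZ, Z2Nat.id by auto. lra.
  - replace (Z.to_nat (up r)) with 0%nat by lia. simpl. assert (IZR (up r) < 0) by (apply (IZR_lt _ 0); lia). lra.
Qed.

Lemma pow_lt_strict (x y : R) (j : nat) : (1 <= j)%nat -> 0 <= x < y -> x ^ j < y ^ j.
Proof.
  intros Hj Hxy. destruct j; [lia|]. clear Hj. induction j.
  - simpl. lra.
  - change (x ^ S (S j)) with (x * x ^ S j). change (y ^ S (S j)) with (y * y ^ S j).
    assert (0 <= x ^ S j) by (apply pow_le; lra). nra.
Qed.

Lemma root_bound (d Cj j : nat) (y z : R) : (1 <= j)%nat -> (1 <= Cj)%nat ->
  INR d ^ j <= INR Cj * Rpower 2 y -> y <= INR j * z -> INR d <= INR Cj * Rpower 2 z.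
Proof.
  intros Hj HC Hd Hyz. apply Rnot_lt_le; intro H.
  assert (HE : 0 < Rpower 2 z) by (unfold Rpower; apply exp_pos).
  assert (HC1 : 1 <= INR Cj) by (apply (le_INR 1); auto).
  assert (H1 : (INR Cj * Rpower 2 z) ^ j < INR d ^ j) by (apply pow_lt_strict; auto; nra).
  rewrite Rpow_mult_distr in H1.
  assert (H2 : Rpower 2 z ^ j = Rpower 2 (z * INR j)).
  { rewrite <- Rpower_pow by auto. apply Rpower_mult. }
  assert (H3 : Rpower 2 y <= Rpower 2 (z * INR j)) by (apply Rle_Rpower; lra).
  assert (H4 : INR Cj <= INR Cj ^ j).
  { destruct j; [lia|]. simpl. pose proof (pow_R1_Rle (INR Cj) j HC1). nra. }
  assert (0 < Rpower 2 y) by (unfold Rpower; apply exp_pos).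
  rewrite H2 in H1. nra.
Qed.

Lemma frac_eq (p p' : Z) (q n : nat) : (1 <= q)%nat -> (q < 3 ^ n)%nat ->
  Rabs (IZR p / INR q - IZR p' / INR q) <= / 3 ^ n -> p = p'.
Proof.
  intros Hq Hqn H. destruct (Z.eq_dec p p') as [|Hne]; auto. exfalso.
  assert (Hq0 : 1 <= INR q) by (apply (le_INR 1); auto).
  assert (Hqn' : INR q < 3 ^ n).
  { replace 3 with (INR 3) by (simpl; lra). rewrite <- pow_INR. apply lt_INR; auto. }
  replace (IZR p / INR q - IZR p' / INR q) with (IZR (p - p') * / INR q) in H
    by (rewrite minus_IZR; field; lra).
  rewrite Rabs_mult, Rabs_Zabs, Rabs_right in H by (left; apply Rinv_0_lt_compat; lra).
  assert (1 <= IZR (Z.abs (p - p'))) by (apply IZR_le; lia).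
  assert (/ 3 ^ n < / INR q) by (apply Rinv_lt_contravar; nra).
  assert (0 < / INR q) by (apply Rinv_0_lt_compat; lra). nra.
Qed.

Lemma ln3_lt_2 : ln 3 < 2.
Proof.
  rewrite <- (ln_exp 2). apply ln_increasing; [lra|].
  pose proof (exp_ineq1 2 ltac:(lra)). lra.
Qed.

Lemma n_bound (n : nat) (eps : R) : 0 < eps ->
  INR n <= 2 / (eps * ln 2) * Rpower 2 (INR n * eps / 2).
Proof.
  intros He. pose proof ln_lt_2.
  unfold Rpower. pose proof (exp_ineq1_le (INR n * eps / 2 * ln 2)).
  assert (0 <= INR n) by apply pos_INR.
  set (E := exp (INR n * eps / 2 * ln 2)) in *.
  assert (INR n * (eps * ln 2) <= 2 * E) by nra.
  assert (0 < eps * ln 2) by nra.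
  apply (Rmult_le_reg_l (eps * ln 2)); auto.
  replace (eps * ln 2 * (2 / (eps * ln 2) * E)) with (2 * E) by (field; lra). nra.
Qed.

Theorem theorem5p2 :
  forall (K eps1 : R), 0 < eps1 ->
  exists (C : R) (N : nat), forall n : nat, (N <= n)%nat ->
    forall l : list (Z * nat), NoDup l -> (forall x, In x l -> in_S K n x) ->
      INR (length l) <= C * Rpower 2 (INR n * (1 + eps1)).
Proof.
  intros K eps He.
  set (k := Z.to_nat (up (2 * K))).
  assert (Hk : 2 * K <= INR k) by apply up_nat.
  set (j := (Z.to_nat (up (4 * (INR k + 1) / eps)) + 1)%nat).
  assert (Hj : 4 * (INR k + 1) / eps <= INR j).
  { unfold j. rewrite plus_INR. pose proof (up_nat (4 * (INR k + 1) / eps)). simpl. lra. }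
  assert (Hj1 : (1 <= j)%nat) by (unfold j; lia).
  destruct (divisor_bound j Hj1) as [Cj [HCj HdB]].
  exists (INR k * INR Cj * (2 / (eps * ln 2))), 1%nat.
  intros n Hn l Hnd Hl.
  set (L := (k * n)%nat).
  set (Qs := flat_map (fun T => divs (3 ^ n * (3 ^ T - 1))) (seq 1 L)).
  assert (H3n : (1 <= 3 ^ n)%nat) by (apply Nat.pow_lower_bound; lia).
  assert (Hlen : (length l <= length (list_prod Qs (all02 n)))%nat).
  { apply (pigeon (fun (x : Z * nat) (y : nat * list nat) =>
       snd x = fst y /\ exists a : nat -> nat, (forall i, a i = 0%nat \/ a i = 2%nat) /\
         infinite_sum (fun i => INR (a (S i)) / 3 ^ (S i)) (IZR (fst x) / INR (snd x)) /\
         snd y = map a (seq 1 n))); auto.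
    - intros [p q] Hx. destruct (Hl _ Hx) as [[a [Ha Hsum]] [Hg [[Hq1 Hq2] [T [[HTp _] HTK]]]]].
      assert (Hq : (1 <= q)%nat) by (eapply Nat.le_trans; [|apply Hq1]; apply Nat.pow_lower_bound; lia).
      exists (q, map a (seq 1 n)). split; [|split; [auto|exists a; auto]].
      apply in_prod_iff. split.
      + destruct (period_div p q T Hq Hg HTp) as [M HM].
        assert (HM' := reduce3 q M (3 ^ T - 1) n Hq Hq2 HM).
        assert (HT1 : (1 <= T)%nat) by (destruct HTp; auto).
        assert (H3T : (2 <= 3 ^ T)%nat).
        { destruct T; [lia|]. simpl. pose proof (Nat.pow_lower_bound 3 T). lia. }
        assert (HTL : (T <= L)%nat).
        {
          assert (Hqr : 1 <= INR q) by (apply (le_INR 1); auto).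
          assert (Hln0 : 0 <= ln (INR q)).
          { destruct (Rle_lt_or_eq_dec 1 (INR q) Hqr) as [Hlt|Heq].
            - rewrite <- ln_1. left. apply ln_increasing; lra.
            - rewrite <- Heq, ln_1. lra. }
          assert (Hlnq : ln (INR q) < INR n * 2).
          { assert (INR q < 3 ^ n).
            { replace 3 with (INR 3) by (simpl; lra). rewrite <- pow_INR. apply lt_INR; auto. }
            assert (ln (INR q) < ln (3 ^ n)) by (apply ln_increasing; lra).
            rewrite ln_pow in * by lra. pose proof ln3_lt_2. pose proof (pos_INR n).
            assert (0 < ln 3).
            { rewrite <- ln_1. apply ln_increasing; lra. }
            nra. }
          assert (HT1r : 1 <= INR T) by (apply (le_INR 1); auto).
          assert (HKp : 0 < K) by nra.
          assert (INR T < INR L).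
          { unfold L. rewrite mult_INR. pose proof (pos_INR n). nra. }
          apply INR_lt in H. lia. }
        apply in_flat_map. exists T. split; [apply in_seq; lia|].
        apply in_divs; [nia|]. split; auto.
      + apply all02_in; [rewrite length_map, length_seq; auto|].
        intros x Hx'. apply in_map_iff in Hx'. destruct Hx' as [i [<- _]]. auto.
    - intros [p q] [p' q'] [q0 pre] Hx Hx' [E1 [a [Ha [Hs Hpre]]]] [E2 [a' [Ha' [Hs' Hpre']]]].
      simpl in *. subst q q'.
      destruct (Hl _ Hx) as [_ [_ [[Hq1 Hq2] _]]].
      assert (Hq : (1 <= q0)%nat) by (eapply Nat.le_trans; [|apply Hq1]; apply Nat.pow_lower_bound; lia).
      rewrite Hpre in Hpre'.
      assert (Heq : forall i, (1 <= i <= n)%nat -> a i = a' i).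
      { intros i Hi. apply (map_eq_in a a' (seq 1 n) Hpre'). apply in_seq. lia. }
      pose proof (cantor_close a a' _ _ n Ha Ha' Heq Hs Hs') as Hc.
      rewrite (frac_eq p p' q0 n Hq Hq2 Hc). auto. }
  rewrite length_prod, all02_length in Hlen.
  set (E := Rpower 2 (INR n * eps / 2)).
  assert (HEp : 0 < E) by (unfold E, Rpower; apply exp_pos).
  assert (HQs : INR (length Qs) <= INR L * (INR Cj * E)).
  { unfold Qs. rewrite <- (length_seq L 1) at 2. apply flat_len.
    intros T HT. apply in_seq in HT.
    set (M := (3 ^ n * (3 ^ T - 1))%nat).
    assert (H3T : (2 <= 3 ^ T)%nat).
    { destruct T; [lia|]. simpl. pose proof (Nat.pow_lower_bound 3 T). lia. }
    assert (HM1 : (1 <= M)%nat) by (unfold M; nia).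
    assert (HMb : (M <= 2 ^ (2 * (n + k * n)))%nat).
    { unfold M. rewrite Nat.pow_mul_r. simpl (2 ^ 2)%nat.
      eapply Nat.le_trans; [|apply Nat.pow_le_mono_l with (a := 3%nat); lia].
      rewrite Nat.pow_add_r. apply Nat.mul_le_mono_l.
      eapply Nat.le_trans; [|apply Nat.pow_le_mono_r with (b := T); unfold L in HT; lia]. lia. }
    apply (root_bound _ Cj j (INR (2 * (n + k * n)))); auto.
    - rewrite <- pow_INR. rewrite Rpower_pow by lra.
      replace (2 ^ (2 * (n + k * n))) with (INR (2 ^ (2 * (n + k * n)))) by (rewrite pow_INR; f_equal; simpl; lra). rewrite <- mult_INR.
      apply le_INR. eapply Nat.le_trans; [apply HdB; auto|]. apply Nat.mul_le_mono_l; auto.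
    - rewrite !mult_INR, plus_INR, mult_INR. simpl (INR 2).
      pose proof (pos_INR n). pose proof (pos_INR k).
      assert (INR j * eps >= 4 * (INR k + 1)).
      { apply Rle_ge. apply (Rmult_le_reg_r (/ eps)). apply Rinv_0_lt_compat; lra.
        replace (INR j * eps * / eps) with (INR j) by (field; lra). lra. }
      nra. }
  pose proof (n_bound n eps He) as Hnb. fold E in Hnb.
  assert (Hfin : Rpower 2 (INR n * (1 + eps)) = E * E * 2 ^ n).
  { unfold E. rewrite <- !Rpower_plus, <- Rpower_pow by lra. rewrite <- Rpower_plus. f_equal. field. }
  rewrite Hfin.
  apply le_INR in Hlen. rewrite mult_INR, pow_INR in Hlen. simpl (INR 2) in Hlen.
  assert (HL : INR L = INR k * INR n) by (unfold L; apply mult_INR).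
  assert (0 < 2 ^ n) by (apply pow_lt; lra).
  assert (0 <= INR k) by apply pos_INR. assert (0 <= INR Cj) by apply pos_INR.
  assert (0 <= INR n) by apply pos_INR.
  set (c := 2 / (eps * ln 2)) in *.
  assert (HA : INR (length Qs) * 2 ^ n <= INR k * INR n * (INR Cj * E) * 2 ^ n).
  { apply Rmult_le_compat_r; [lra|]. rewrite <- HL. exact HQs. }
  assert (HB : INR k * INR n * (INR Cj * E) * 2 ^ n <= INR k * (c * E) * (INR Cj * E) * 2 ^ n).
  { apply Rmult_le_compat_r; [lra|]. apply Rmult_le_compat_r; [nra|]. apply Rmult_le_compat_l; lra. }
  eapply Rle_trans; [apply Hlen|]. eapply Rle_trans; [apply HA|]. eapply Rle_trans; [apply HB|].
  right. ring.
Qed.
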